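(* Let $\mu$ be an exterior $3$-form in a $6$-dimensional real vector space $V$, let $\xi^1,\dots,\xi^6$ be a basis of $V^*$, and let $H'$ be the set of all $\xi\in V^*$ such that the $4$-form $\xi\wedge\mu$ is decomposable. (i) If $\mu=\xi^1\wedge\xi^2\wedge\xi^3+\xi^3\wedge\xi^4\wedge\xi^5+\xi^5\wedge\xi^6\wedge\xi^1$, then $H'$ equals the linear span of $\xi^1,\xi^3,\xi^5$. (ii) If $\mu=\xi^1\wedge\xi^2\wedge\xi^3+\xi^4\wedge\xi^5\wedge\xi^6$, then $H'$ is the set-theoretic union of the span of $\xi^1,\xi^2,\xi^3$ and the span of $\xi^4,\xi^5,\xi^6$.
   Context: A $p$-form is decomposable if it is an exterior product of $p$ $1$-forms (the zero form counts as decomposable). *)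

(* Defs.v *)
(* Exterior forms on a real vector space V are represented as
   alternating multilinear maps (V^k -> R); a k-form is a function ('I_k -> V) -> R. *)
From HB Require Import structures.
From mathcomp Require Import all_boot all_order all_algebra.
From mathcomp Require Import reals.
Set Implicit Arguments. Unset Strict Implicit. Unset Printing Implicit Defensive.
Import Order.TTheory GRing.Theory Num.Theory.
Local Open Scope ring_scope.

Section Forms.
Variables (R : realType) (V : vectType R).

Definition is_lin (f : V -> R) : Prop :=
  forall (a : R) (u w : V), f (a *: u + w) = a * f u + f w.

Definition wedge_n (k : nat) (eta : 'I_k -> V -> R) : ('I_k -> V) -> R :=
  fun v => \det (\matrix_(i < k, j < k) eta i (v j)).

Definition wedge_1_3 (xi : V -> R) (mu : ('I_3 -> V) -> R) : ('I_4 -> V) -> R :=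
  fun v => \sum_(i < 4) (-1) ^+ i * xi (v i) * mu (fun j : 'I_3 => v (lift i j)).

(* a 4-form is decomposable iff it is a wedge product of four 1-forms
   (the zero form is included, taking all eta_i = 0) *)
Definition decomposable4 (om : ('I_4 -> V) -> R) : Prop :=
  exists eta : 'I_4 -> V -> R,
    (forall i, is_lin (eta i)) /\ forall v, om v = wedge_n eta v.

Definition tri (f g h : V -> R) : 'I_3 -> V -> R :=
  fun k => match val k with 0 => f | 1 => g | _ => h end.

Definition wedge3 (f g h : V -> R) : ('I_3 -> V) -> R := wedge_n (tri f g h).

Definition add_form (k : nat) (a b : ('I_k -> V) -> R) : ('I_k -> V) -> R :=
  fun v => a v + b v.

(* xs is a basis of V^* (given dim V = 6, linear independence suffices) *)
Definition dual_basis6 (xs : 'I_6 -> V -> R) : Prop :=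
  (forall i, is_lin (xs i)) /\
  forall c : 'I_6 -> R, (forall v, \sum_(i < 6) c i * xs i v = 0) -> forall i, c i = 0.

Definition in_span3 (xi f g h : V -> R) : Prop :=
  exists a b c : R, forall v, xi v = a * f v + b * g v + c * h v.

End Forms.

(* xi^(i+1) in the paper is  xs (inord i)  here (0-based indexing) *)

(* Main.v *)
From HB Require Import structures.
From mathcomp Require Import all_boot all_order all_algebra.
From mathcomp Require Import reals ring lra.
Require Import Defs.
From Stdlib Require Import FunctionalExtensionality.
Set Implicit Arguments. Unset Strict Implicit. Unset Printing Implicit Defensive.
Import Order.TTheory GRing.Theory Num.Theory.
Local Open Scope ring_scope.

Section Det.
Variable R : comNzRingType.

Definition subF (F : nat -> nat -> R) (i0 j0 : nat) := fun a b => F (bump i0 a) (bump j0 b).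
Lemma det_sub n (F : nat -> nat -> R) (i0 j0 : 'I_n.+1) :
  row' i0 (col' j0 (\matrix_(i < n.+1, j < n.+1) F i j)) =
  \matrix_(i < n, j < n) (subF F i0 j0) i j.
Proof. by apply/matrixP => i j; rewrite !mxE. Qed.

Lemma det2 (F : nat -> nat -> R) :
  \det (\matrix_(i < 2, j < 2) F i j) = F 0 0 * F 1 1 - F 1 0 * F 0 1.
Proof.
rewrite (expand_det_col _ ord0) !big_ord_recl big_ord0 /cofactor !det_sub.
rewrite !det_mx11 !mxE /subF /= /bump /=. ring.
Qed.

Lemma det3 (F : nat -> nat -> R) :
  \det (\matrix_(i < 3, j < 3) F i j) =
  F 0 0 * (F 1 1 * F 2 2 - F 2 1 * F 1 2)
  - F 1 0 * (F 0 1 * F 2 2 - F 2 1 * F 0 2)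
  + F 2 0 * (F 0 1 * F 1 2 - F 1 1 * F 0 2).
Proof.
rewrite (expand_det_col _ ord0) !big_ord_recl big_ord0 /cofactor !det_sub.
rewrite !det2 !mxE /subF /= /bump /=. ring.
Qed.

Lemma det4 (F : nat -> nat -> R) :
  \det (\matrix_(i < 4, j < 4) F i j) =
  F 0 0 * (F 1 1 * (F 2 2 * F 3 3 - F 3 2 * F 2 3)
  - F 2 1 * (F 1 2 * F 3 3 - F 3 2 * F 1 3)
  + F 3 1 * (F 1 2 * F 2 3 - F 2 2 * F 1 3))
  - F 1 0 * (F 0 1 * (F 2 2 * F 3 3 - F 3 2 * F 2 3)
  - F 2 1 * (F 0 2 * F 3 3 - F 3 2 * F 0 3)
  + F 3 1 * (F 0 2 * F 2 3 - F 2 2 * F 0 3))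
  + F 2 0 * (F 0 1 * (F 1 2 * F 3 3 - F 3 2 * F 1 3)
  - F 1 1 * (F 0 2 * F 3 3 - F 3 2 * F 0 3)
  + F 3 1 * (F 0 2 * F 1 3 - F 1 2 * F 0 3))
  - F 3 0 * (F 0 1 * (F 1 2 * F 2 3 - F 2 2 * F 1 3)
  - F 1 1 * (F 0 2 * F 2 3 - F 2 2 * F 0 3)
  + F 2 1 * (F 0 2 * F 1 3 - F 1 2 * F 0 3)).
Proof.
rewrite (expand_det_col _ ord0) !big_ord_recl big_ord0 /cofactor !det_sub.
rewrite !det3 !mxE /subF /= /bump /=. ring.
Qed.
End Det.

Section Main.
Variables (R : realType) (V : vectType R).

Definition v4n (a b c d : V) (n : nat) : V :=
  match n with 0 => a | 1 => b | 2 => c | _ => d end.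
Definition v4 (a b c d : V) (i : 'I_4) : V := v4n a b c d i.
Definition v3n (a b c : V) (n : nat) : V :=
  match n with 0 => a | 1 => b | _ => c end.
Definition v3 (a b c : V) (i : 'I_3) : V := v3n a b c i.

Definition Fe (eta : 'I_4 -> V -> R) a b c d := fun n m => eta (inord n) (v4n a b c d m).
Lemma wedge4E (eta : 'I_4 -> V -> R) a b c d :
  wedge_n eta (v4 a b c d) =
  \det (\matrix_(i < 4, j < 4) (Fe eta a b c d) i j).
Proof. by rewrite /wedge_n; congr (\det _); apply/matrixP => i j; rewrite !mxE /Fe inord_val. Qed.

Lemma plucker (eta : 'I_4 -> V -> R) A B C D P Q :
  let g X Y := wedge_n eta (v4 X Y P Q) in
  g A B * g C D - g A C * g B D + g A D * g B C = 0.
Proof. rewrite /= !wedge4E !det4 /Fe /=. ring. Qed.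

Definition F3 (f g h : V -> R) a b c := fun n m =>
  (match n with 0 => f | 1 => g | _ => h end) (v3n a b c m).
Lemma wedge3E (f g h : V -> R) a b c :
  wedge3 f g h (v3 a b c) =
  f a * (g b * h c - g c * h b) - g a * (f b * h c - f c * h b)
  + h a * (f b * g c - f c * g b).
Proof.
rewrite /wedge3 /wedge_n.
rewrite (_ : \matrix_(i, j) _ = \matrix_(i < 3, j < 3) (F3 f g h a b c) i j).
  rewrite det3 /F3 /=; ring.
by apply/matrixP => i j; rewrite !mxE /F3; case: i => [[|[|[|?]]] ?].
Qed.

Lemma wedge13E (xi : V -> R) mu a b c d :
  wedge_1_3 xi mu (v4 a b c d) =
  xi a * mu (v3 b c d) - xi b * mu (v3 a c d) + xi c * mu (v3 a b d)
  - xi d * mu (v3 a b c).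
Proof.
rewrite /wedge_1_3 !big_ord_recl big_ord0 /=.
have L : forall i0 : 'I_4, forall a' b' c', (forall j : 'I_3,
   v4 a b c d (lift i0 j) = v3 a' b' c' j) ->
   mu (fun j => v4 a b c d (lift i0 j)) = mu (v3 a' b' c').
  by move=> i0 a' b' c' H; congr mu; apply: functional_extensionality.
rewrite (L ord0 b c d) ?(L (lift ord0 ord0) a c d) ?(L (lift ord0 (lift ord0 ord0)) a b d) ?(L (lift ord0 (lift ord0 (lift ord0 ord0))) a b c);
  try by case=> [[|[|[|?]]] ?].
rewrite /v4 /= expr0 expr1 !exprS expr0 /=. ring.
Qed.

Section Lin.
Variable f : V -> R.
Hypothesis hf : is_lin f.
Lemma lin0 : f 0 = 0.
Proof. have h := hf 1 0 0; rewrite scale1r addr0 mul1r in h; lra. Qed.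
Lemma linD u w : f (u + w) = f u + f w.
Proof. by have h := hf 1 u w; rewrite scale1r mul1r in h. Qed.
Lemma linZ a u : f (a *: u) = a * f u.
Proof. by have h := hf a u 0; rewrite !addr0 lin0 addr0 in h. Qed.
Lemma linB u w : f (u - w) = f u - f w.
Proof. by rewrite linD -scaleN1r linZ mulN1r. Qed.
Lemma lin_sum n (F : 'I_n -> V) : f (\sum_(i < n) F i) = \sum_(i < n) f (F i).
Proof. exact: (big_morph f linD lin0). Qed.
End Lin.

Lemma dual_exists (hdim : \dim (fullv : {vspace V}) = 6%N)
  (xs : 'I_6 -> V -> R) (hxs : dual_basis6 xs) :
  exists e : 'I_6 -> V, (forall i j, xs i (e j) = (i == j)%:R) /\
    (forall xi, is_lin xi -> forall v, xi v = \sum_(j < 6) xs j v * xi (e j)).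
Proof.
case: hxs => hlin hind.
set n := \dim (fullv : {vspace V}).
set b := vbasis (fullv : {vspace V}).
have bE : forall v : V, v = \sum_(k < n) coord b k v *: b`_k.
  by move=> v; apply: coord_vbasis; apply: memvf.
have fE : forall f, is_lin f -> forall v, f v = \sum_(k < n) coord b k v * f b`_k.
  move=> f hf v; rewrite {1}(bE v) lin_sum //.
  by apply: eq_bigr => k _; rewrite linZ.
pose M : 'M[R]_(n, 6) := \matrix_(k, i) xs i b`_k.
have kerT : kermx M^T = 0.
  apply/row_matrixP => r; rewrite row0.
  set u := row r (kermx M^T).
  have hu : u *m M^T = 0 by rewrite /u -row_mul mulmx_ker row0.
  have hz : forall i, u 0 i = 0.
    apply: hind => v; rewrite (eq_bigr (fun i => u 0 i * \sum_(k < n) coord b k v * xs i b`_k)); last first.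
      by move=> i _; rewrite -fE.
    under eq_bigr do rewrite big_distrr.
    rewrite exchange_big /= big1 // => k _.
    have h : \sum_(i<6) u 0 i * xs i b`_k = 0.
      have := congr1 (fun A : 'M[R]_(1,n) => A 0 k) hu; rewrite !mxE => h'; apply: (etrans _ h').
      by apply: eq_bigr => i _; rewrite !mxE.
    rewrite (eq_bigr (fun i => coord b k v * (u 0 i * xs i b`_k))); last by move=> i _; ring.
    by rewrite -big_distrr /= h mulr0.
  by apply/rowP => i; rewrite hz mxE.
have rk : \rank M = 6%N.
  have := mxrank_ker M^T; rewrite kerT mxrank0 mxrank_tr => /esym/eqP.
  rewrite subn_eq0 => h; apply/eqP; rewrite eqn_leq h andbT.
  by rewrite -mxrank_tr rank_leq_row.
have /row_fullP [N hN] : row_full M by rewrite /row_full rk.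
pose e j := \sum_(k < n) N j k *: b`_k.
have he : forall i j, xs i (e j) = (i == j)%:R.
  move=> i j; rewrite lin_sum //.
  have := congr1 (fun A : 'M[R]_6 => A j i) hN; rewrite !mxE eq_sym => <-.
  by apply: eq_bigr => k _; rewrite linZ // mxE.
exists e; split => // xi hxi v.
set w := v - \sum_(j < 6) xs j v *: e j.
have hw : forall i, xs i w = 0.
  move=> i; rewrite /w linB // lin_sum //.
  rewrite (eq_bigr (fun j => xs j v * (i == j)%:R)); last by move=> j _; rewrite linZ // he.
  rewrite (bigD1 i) //= eqxx mulr1 big1 ?addr0 ?subrr // => j /negPf.
  by rewrite eq_sym => ->; rewrite mulr0.
pose c : 'rV[R]_n := \row_k coord b k w.
have hc : c *m M = 0.
  apply/rowP => i; rewrite !mxE; apply: (etrans _ (hw i)).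
  rewrite (fE _ (hlin i) w); by apply: eq_bigr => k _; rewrite !mxE.
have kerM : kermx M = 0.
  apply/eqP; rewrite -mxrank_eq0 mxrank_ker rk.
  by rewrite /n hdim.
have c0 : c = 0 by apply/eqP; rewrite -submx0 -kerM; apply/sub_kermxP.
have w0 : w = 0.
  rewrite (bE w) big1 // => k _.
  by have := congr1 (fun A : 'M[R]_(1,n) => A 0 k) c0; rewrite !mxE => ->; rewrite scale0r.
have := congr1 xi w0; rewrite lin0 // /w linB // lin_sum // => /eqP.
rewrite subr_eq0 => /eqP ->; apply: eq_bigr => j _; by rewrite linZ.
Qed.

Definition famn (f0 f1 f2 f3 : V -> R) (n : nat) : V -> R :=
  match n with 0 => f0 | 1 => f1 | 2 => f2 | _ => f3 end.
Definition fam f0 f1 f2 f3 (i : 'I_4) := famn f0 f1 f2 f3 i.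

Definition Ffam f0 f1 f2 f3 a b c d := fun n m => famn f0 f1 f2 f3 n (v4n a b c d m).
Lemma wedge_fam f0 f1 f2 f3 a b c d :
  wedge_n (fam f0 f1 f2 f3) (v4 a b c d) =
  \det (\matrix_(i < 4, j < 4) (Ffam f0 f1 f2 f3 a b c d) i j).
Proof.
by rewrite /wedge_n; congr (\det _); apply/matrixP => i j; rewrite !mxE.
Qed.

Lemma v4_eta (v : 'I_4 -> V) :
  v = v4 (v (inord 0)) (v (inord 1)) (v (inord 2)) (v (inord 3)).
Proof.
apply: functional_extensionality => -[[|[|[|[|k]]]] Hk] /=;
  rewrite /v4 /=; try (congr v; apply/val_inj; rewrite /= inordK //).
Qed.

Lemma dec_of (om : ('I_4 -> V) -> R) f0 f1 f2 f3 :
  is_lin f0 -> is_lin f1 -> is_lin f2 -> is_lin f3 ->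
  (forall a b c d, om (v4 a b c d) = wedge_n (fam f0 f1 f2 f3) (v4 a b c d)) ->
  decomposable4 om.
Proof.
move=> h0 h1 h2 h3 H; exists (fam f0 f1 f2 f3); split.
  by case=> [[|[|[|[|k]]]] Hk].
by move=> v; rewrite (v4_eta v) H.
Qed.

Lemma is_lin_comb (f g h : V -> R) a b c :
  is_lin f -> is_lin g -> is_lin h ->
  is_lin (fun v => - (a * f v + b * g v + c * h v)).
Proof. move=> hf hg hh s u w; rewrite hf hg hh; ring. Qed.

Lemma sum6 (F : 'I_6 -> R) :
  \sum_(j < 6) F j = F (inord 0) + F (inord 1) + F (inord 2) + F (inord 3)
     + F (inord 4) + F (inord 5).
Proof.
rewrite (eq_bigr (fun j : 'I_6 => F (inord j))); last by move=> j _; rewrite inord_val.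
rewrite -(big_mkord xpredT (fun j => F (inord j))).
rewrite /index_iota /= !big_cons big_nil; ring.
Qed.
End Main.

Unset Implicit Arguments.
Set Strict Implicit.

Ltac solve_rel P := (rewrite -[RHS]P; ring) ||
  (apply/eqP; rewrite -oppr_eq0; apply/eqP; rewrite -[RHS]P; ring).

Theorem lemma4p3 (R : realType) (V : vectType R) (hdim : \dim (fullv : {vspace V}) = 6%N)
  (xs : 'I_6 -> V -> R) (hxs : dual_basis6 xs) :
  let x := fun i : nat => xs (@inord 5 i) in
  (* (i) mu = x1^x2^x3 + x3^x4^x5 + x5^x6^x1 *)
  (forall xi : V -> R, is_lin xi ->
     (decomposable4 (wedge_1_3 xi
        (add_form (add_form (wedge3 (x 0%N) (x 1%N) (x 2%N)) (wedge3 (x 2%N) (x 3%N) (x 4%N)))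
                  (wedge3 (x 4%N) (x 5%N) (x 0%N))))
      <-> in_span3 xi (x 0%N) (x 2%N) (x 4%N))) /\
  (* (ii) mu = x1^x2^x3 + x4^x5^x6 *)
  (forall xi : V -> R, is_lin xi ->
     (decomposable4 (wedge_1_3 xi
        (add_form (wedge3 (x 0%N) (x 1%N) (x 2%N)) (wedge3 (x 3%N) (x 4%N) (x 5%N))))
      <-> (in_span3 xi (x 0%N) (x 1%N) (x 2%N) \/ in_span3 xi (x 3%N) (x 4%N) (x 5%N)))).
Proof.
move=> x.
have [e [he hexp]] := dual_exists hdim hxs.
case: hxs => hlin _.
pose E k := e (@inord 5 k).
have xE : forall k l, (k < 6)%N -> (l < 6)%N -> x k (E l) = (k == l)%:R.
  move=> k l hk hl; rewrite /x /E he; congr (_ %:R).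
  by rewrite -(inj_eq val_inj) /= !inordK.
have xexp : forall xi, is_lin xi -> forall v, xi v =
   x 0 v * xi (E 0) + x 1 v * xi (E 1) + x 2 v * xi (E 2) + x 3 v * xi (E 3)
   + x 4 v * xi (E 4) + x 5 v * xi (E 5).
  by move=> xi hxi v; rewrite (hexp xi hxi v) sum6.
have xl : forall k, is_lin (x k) by move=> k; apply: hlin.
split=> xi hxi; split.
- case=> eta [hl heq].
  have P1 := plucker eta (E 0) (E 2) (E 3) (E 5) (E 1) (E 4).
  rewrite /= -!heq !wedge13E /add_form !wedge3E !xE // /= in P1.
  have h1 : xi (E 1) ^+ 2 = 0 by solve_rel P1.
  move/eqP: h1; rewrite sqrf_eq0 => /eqP h1.
  have P3 := plucker eta (E 1) (E 2) (E 4) (E 5) (E 0) (E 3).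
  rewrite /= -!heq !wedge13E /add_form !wedge3E !xE // /= in P3.
  have h3 : xi (E 3) ^+ 2 = 0 by solve_rel P3.
  move/eqP: h3; rewrite sqrf_eq0 => /eqP h3.
  have P5 := plucker eta (E 0) (E 1) (E 3) (E 4) (E 2) (E 5).
  rewrite /= -!heq !wedge13E /add_form !wedge3E !xE // /= in P5.
  have h5 : xi (E 5) ^+ 2 = 0 by solve_rel P5.
  move/eqP: h5; rewrite sqrf_eq0 => /eqP h5.
  exists (xi (E 0)), (xi (E 2)), (xi (E 4)) => v.
  by rewrite (xexp xi hxi v) h1 h3 h5; ring.
- case=> [a [b [c hv]]].
  apply: (dec_of (f0 := x 0) (f1 := x 2) (f2 := x 4) (f3 := fun v => - (a * x 3 v + b * x 5 v + c * x 1 v))) => //.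
    exact: is_lin_comb.
  move=> a' b' c' d'; rewrite wedge13E wedge_fam det4 /Ffam /= /add_form !wedge3E !hv.
  ring.
- case=> eta [hl heq].
  have P03 := plucker eta (E 1) (E 2) (E 4) (E 5) (E 0) (E 3).
  rewrite /= -!heq !wedge13E /add_form !wedge3E !xE // /= in P03.
  have h03 : xi (E 0) * xi (E 3) = 0 by solve_rel P03.
  have P04 := plucker eta (E 1) (E 2) (E 3) (E 5) (E 0) (E 4).
  rewrite /= -!heq !wedge13E /add_form !wedge3E !xE // /= in P04.
  have h04 : xi (E 0) * xi (E 4) = 0 by solve_rel P04.
  have P05 := plucker eta (E 1) (E 2) (E 3) (E 4) (E 0) (E 5).
  rewrite /= -!heq !wedge13E /add_form !wedge3E !xE // /= in P05.
  have h05 : xi (E 0) * xi (E 5) = 0 by solve_rel P05.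
  have P13 := plucker eta (E 0) (E 2) (E 4) (E 5) (E 1) (E 3).
  rewrite /= -!heq !wedge13E /add_form !wedge3E !xE // /= in P13.
  have h13 : xi (E 1) * xi (E 3) = 0 by solve_rel P13.
  have P14 := plucker eta (E 0) (E 2) (E 3) (E 5) (E 1) (E 4).
  rewrite /= -!heq !wedge13E /add_form !wedge3E !xE // /= in P14.
  have h14 : xi (E 1) * xi (E 4) = 0 by solve_rel P14.
  have P15 := plucker eta (E 0) (E 2) (E 3) (E 4) (E 1) (E 5).
  rewrite /= -!heq !wedge13E /add_form !wedge3E !xE // /= in P15.
  have h15 : xi (E 1) * xi (E 5) = 0 by solve_rel P15.
  have P23 := plucker eta (E 0) (E 1) (E 4) (E 5) (E 2) (E 3).
  rewrite /= -!heq !wedge13E /add_form !wedge3E !xE // /= in P23.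
  have h23 : xi (E 2) * xi (E 3) = 0 by solve_rel P23.
  have P24 := plucker eta (E 0) (E 1) (E 3) (E 5) (E 2) (E 4).
  rewrite /= -!heq !wedge13E /add_form !wedge3E !xE // /= in P24.
  have h24 : xi (E 2) * xi (E 4) = 0 by solve_rel P24.
  have P25 := plucker eta (E 0) (E 1) (E 3) (E 4) (E 2) (E 5).
  rewrite /= -!heq !wedge13E /add_form !wedge3E !xE // /= in P25.
  have h25 : xi (E 2) * xi (E 5) = 0 by solve_rel P25.
  case: (boolP [&& xi (E 0) == 0, xi (E 1) == 0 & xi (E 2) == 0]) => [/and3P [/eqP z0 /eqP z1 /eqP z2] | hnz].
    right; exists (xi (E 3)), (xi (E 4)), (xi (E 5)) => v.
    by rewrite (xexp xi hxi v) z0 z1 z2; ring.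
  have z3 : xi (E 3) = 0.
    apply/eqP; apply: (contraR _ hnz) => n.
    apply/and3P; split; [move/eqP: h03 | move/eqP: h13 | move/eqP: h23];
      by rewrite mulf_eq0 (negPf n) orbF.
  have z4 : xi (E 4) = 0.
    apply/eqP; apply: (contraR _ hnz) => n.
    apply/and3P; split; [move/eqP: h04 | move/eqP: h14 | move/eqP: h24];
      by rewrite mulf_eq0 (negPf n) orbF.
  have z5 : xi (E 5) = 0.
    apply/eqP; apply: (contraR _ hnz) => n.
    apply/and3P; split; [move/eqP: h05 | move/eqP: h15 | move/eqP: h25];
      by rewrite mulf_eq0 (negPf n) orbF.
  left; exists (xi (E 0)), (xi (E 1)), (xi (E 2)) => v.
  by rewrite (xexp xi hxi v) z3 z4 z5; ring.
- case=> [[a [b [c hv]]]|[a [b [c hv]]]].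
    apply: (dec_of (f0 := xi) (f1 := x 3) (f2 := x 4) (f3 := x 5)) => //.
    move=> a' b' c' d'; rewrite wedge13E wedge_fam det4 /Ffam /= /add_form !wedge3E !hv.
    ring.
  apply: (dec_of (f0 := xi) (f1 := x 0) (f2 := x 1) (f3 := x 2)) => //.
  move=> a' b' c' d'; rewrite wedge13E wedge_fam det4 /Ffam /= /add_form !wedge3E !hv.
  ring.
Qed.
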